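(* $\mathfrak{b}_{\mathrm{game}}^{\mathrm{II}} = \mathfrak{d}$, where $\mathfrak{d}$ is the dominating number.
   Context: For $x,y\in\omega^\omega$, $x\le^* y$ means $x(n)\le y(n)$ for all but finitely many $n$. $\mathfrak{d}$ is the least size of a family $\mathcal{A}\subseteq\omega^\omega$ such that every $x\in\omega^\omega$ satisfies $x\le^* y$ for some $y\in\mathcal{A}$. For $\mathcal{A}\subseteq\omega^\omega$, the bounding game with respect to $\mathcal{A}$ is the infinite two-player game in which, at round $k$, Player I plays $n_k\in\omega$ and then Player II plays $i_k\in\{0,1\}$. Player II wins iff $i_k=1$ for infinitely many $k$ and there is $g\in\mathcal{A}$ with $\{k\in\omega: i_k=1\}=\{k\in\omega: n_k<g(k)\}$. $\mathfrak{b}_{\mathrm{game}}^{\mathrm{II}}$ is the least $|\mathcal{A}|$ such that Player II has a winning strategy in the bounding game with respect to $\mathcal{A}$. *)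

(* Defs.v *)
From mathcomp Require Import all_boot.
Set Implicit Arguments. Unset Strict Implicit. Unset Printing Implicit Defensive.

Definition funfam := (nat -> nat) -> Prop.

Definition le_star (x y : nat -> nat) : Prop :=
  exists N, forall n, N <= n -> x n <= y n.

Definition dominating (A : funfam) : Prop :=
  forall x : nat -> nat, exists2 y, A y & le_star x y.

Definition card_le (B A : funfam) : Prop :=
  exists f : (nat -> nat) -> (nat -> nat),
    (forall g, B g -> A (f g)) /\
    (forall g h, B g -> B h -> f g = f h -> g = h).

(* A strategy for Player II: given Player I's moves n_0,...,n_k so far,
   answer i_k.  (II's own earlier moves are determined by the strategy, so
   this loses no generality.) *)
Definition strategyII := seq nat -> bool.

Definition answer (sigma : strategyII) (x : nat -> nat) (k : nat) : bool :=
  sigma (mkseq x k.+1).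

Definition winningII (A : funfam) (sigma : strategyII) : Prop :=
  forall x : nat -> nat,
    (forall m, exists2 k, m <= k & answer sigma x k) /\
    (exists2 g, A g & forall k, answer sigma x k = (x k < g k)).

Definition II_has_winning (A : funfam) : Prop := exists sigma, winningII A sigma.

(* Main.v *)
Require Import Defs.
From mathcomp Require Import all_boot.
From mathcomp Require Import boolp classical_sets.
From Stdlib Require Import ClassicalEpsilon.
Set Implicit Arguments. Unset Strict Implicit.

Definition inhf : inhabited (nat -> nat) := inhabits (fun _ => 0).

Definition trip := ((nat -> nat) * nat * (nat -> nat))%type.

Definition goodG (A : funfam) (G : set trip) : Prop :=
  [/\ forall a n b b', G (a,n,b) -> G (a,n,b') -> b = b',
      forall a n b a' n', G (a,n,b) -> G (a',n',b) -> a = a' /\ n = n',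
      forall a n b, G (a,n,b) -> forall m, exists c, G (a,m,c)
    & forall a n b, G (a,n,b) -> A a /\ exists m c, G (b,m,c)].

Lemma goodG_chain A (F : set (set trip)) :
  (F `<=` goodG A)%classic -> total_on F subset -> goodG A (\bigcup_(X in F) X)%classic.
Proof.
move=> FP Ftot.
have sub2 : forall t1 t2, (\bigcup_(X in F) X)%classic t1 -> (\bigcup_(X in F) X)%classic t2 ->
  exists X, [/\ F X, X t1 & X t2].
  move=> t1 t2 [X1 F1 X1t] [X2 F2 X2t].
  case: (Ftot _ _ F1 F2) => [S|S]; [exists X2 | exists X1]; split => //; exact: S.
split.
- move=> a n b b' H1 H2; have [X [FX h1 h2]] := sub2 _ _ H1 H2.
  by case: (FP _ FX) => f _ _ _; exact: f h1 h2.
- move=> a n b a' n' H1 H2; have [X [FX h1 h2]] := sub2 _ _ H1 H2.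
  by case: (FP _ FX) => _ f _ _; exact: f h1 h2.
- move=> a n b [X FX Xt] m; case: (FP _ FX) => _ _ t _; have [c Hc] := t _ _ _ Xt m.
  by exists c; exists X.
- move=> a n b [X FX Xt]; case: (FP _ FX) => _ _ _ r; have [Aa [m [c Hc]]] := r _ _ _ Xt.
  by split=> //; exists m, c; exists X.
Qed.

Definition pickdom (A : funfam) (y : nat -> nat) : nat -> nat :=
  epsilon inhf (fun a => A a /\ le_star y a).

Lemma pickdomP A y : dominating A -> A (pickdom A y) /\ le_star y (pickdom A y).
Proof.
move=> dA; apply: (epsilon_spec inhf (fun a => A a /\ le_star y a)).
by case: (dA y) => a Aa la; exists a.
Qed.

Fixpoint xs (A : funfam) (x : nat -> nat) (i : nat) : nat -> nat :=
  if i is i'.+1 then (fun k => maxn (xs A x i' k) (pickdom A (xs A x i') k).+1) else x.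
Definition es A x i := pickdom A (xs A x i).

Lemma xs_mono A x i j k : i <= j -> xs A x i k <= xs A x j k.
Proof.
elim: j => [|j IH]; first by rewrite leqn0 => /eqP ->.
rewrite leq_eqVlt => /orP[/eqP -> //|]; rewrite ltnS => /IH h.
by apply: (leq_trans h) => /=; rewrite leq_maxl.
Qed.

Lemma es_lt A x i j : dominating A -> i < j -> es A x i <> es A x j.
Proof.
move=> dA lij E.
have [_ [N HN]] := pickdomP (xs A x j) dA.
have h1 := HN N (leqnn N).
have h2 : (es A x i N).+1 <= xs A x i.+1 N by rewrite /= leq_maxr.
have h3 := xs_mono A x N lij.
rewrite -/(es A x j) -E in h1.
have := leq_trans h2 (leq_trans h3 h1); by rewrite ltnn.
Qed.

Lemma es_inj A x i j : dominating A -> es A x i = es A x j -> i = j.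
Proof.
move=> dA E; case: (ltngtP i j) => // h.
- by case: (es_lt (x:=x) dA h).
- by case: (es_lt (x:=x) dA h).
Qed.

Definition pr (i n : nat) := CodeSeq.code [:: i; n].
Lemma pr_inj i n i' n' : pr i n = pr i' n' -> i = i' /\ n = n'.
Proof. by move/(can_inj CodeSeq.codeK) => [-> ->]. Qed.

Lemma absorb (A : funfam) : dominating A ->
  exists (D : funfam) (io : (nat->nat) -> nat -> (nat->nat)),
   [/\ dominating D, forall a n, D a -> A (io a n) &
      forall a n a' n', D a -> D a' -> io a n = io a' n' -> a = a' /\ n = n'].
Proof.
move=> dA.
have [G [gG maxG]] := Zorn_bigcup (@goodG_chain A).
pose D : funfam := fun a => exists n b, G (a,n,b).
pose io a n := epsilon inhf (fun b => G (a,n,b)).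
case: gG => [gf gi gt gr].
have ioP : forall a n, D a -> G (a,n,io a n).
  move=> a n [m [b Hb]]; apply: (epsilon_spec inhf (fun b => G (a,n,b))).
  exact: gt _ _ _ Hb n.
exists D, io; split.
- move=> x; apply: NNPP => hx.
  have nD : forall y, D y -> ~ le_star x y by move=> y Dy ly; apply: hx; exists y.
  pose e := es A x.
  have eA : forall i, A (e i) by move=> i; case: (pickdomP (xs A x i) dA).
  have xle : forall i k, x k <= xs A x i k by move=> i k; exact: (xs_mono A x k (leq0n i)).
  have eD : forall i, ~ D (e i).
    move=> i Di; apply: (nD _ Di); case: (pickdomP (xs A x i) dA) => _ [N HN].
    by exists N => n Hn; apply: leq_trans (xle i n) (HN n Hn).
  pose H : set trip := fun t => G t \/ exists i, t.1.1 = e i /\ t.2 = e (pr i t.1.2).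
  have GD : forall a n b, G (a,n,b) -> D a by move=> a n b h; exists n, b.
  have GDr : forall a n b, G (a,n,b) -> D b.
    by move=> a n b h; case: (gr _ _ _ h) => _ [m [c hc]]; exists m, c.
  have gH : goodG A H.
    split.
    - move=> a n b b' [h1|[i /= [h1 h1']]] [h2|[j /= [h2 h2']]].
      + exact: gf h1 h2.
      + by case: (eD j); rewrite -h2; apply: GD h1.
      + by case: (eD i); rewrite -h1; apply: GD h2.
      + have ij : i = j by exact: (es_inj dA (etrans (esym h1) h2)).
        by rewrite h1' h2' ij.
    - move=> a n b a' n' [h1|[i /= [h1 h1']]] [h2|[j /= [h2 h2']]].
      + exact: gi h1 h2.
      + by case: (eD (pr j n')); rewrite -h2'; apply: GDr h1.
      + by case: (eD (pr i n)); rewrite -h1'; apply: GDr h2.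
      + have := es_inj dA (etrans (esym h1') h2') => /pr_inj [ij ->].
        by rewrite h1 h2 ij.
    - move=> a n b [h1|[i /= [h1 h1']]] m.
      + by have [c hc] := gt _ _ _ h1 m; exists c; left.
      + by exists (e (pr i m)); right; exists i.
    - move=> a n b [h1|[i /= [h1 h1']]].
      + case: (gr _ _ _ h1) => Aa [m [c hc]]; split => //; exists m, c; by left.
      + split; first by rewrite h1.
        exists 0, (e (pr (pr i n) 0)); right; exists (pr i n) => /=; by rewrite h1'.
  apply: (maxG H) gH; split; first by move=> t ht; left.
  move=> sub; have : H (e 0, 0, e (pr 0 0)) by right; exists 0.
  by move/sub => h; apply: (eD 0); exists 0, (e (pr 0 0)).
- move=> a n Da; have h := ioP a n Da.
  by case: (gr _ _ _ h) => _ [m [c hc]]; case: (gr _ _ _ hc).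
- move=> a n a' n' Da Da' E.
  have h1 := ioP a n Da; have h2 := ioP a' n' Da'; rewrite E in h1.
  exact: gi h1 h2.
Qed.

Lemma part1 (A : funfam) : dominating A -> exists2 B : funfam, II_has_winning B & card_le B A.
Proof.
move=> dA; have [D [io [dD ioA ioI]]] := absorb dA.
pose mk (a : nat -> nat) (c : nat) := fun k => (maxn (a k) c).+1.
pose B : funfam := fun g => exists a c, D a /\ g = mk a c.
exists B.
- exists (fun _ => true) => x; split.
  + by move=> m; exists m.
  + have [a Da [N HN]] := dD x.
    exists (mk a (\max_(j < N) x j)); first by exists a, (\max_(j < N) x j).
    move=> k; rewrite /answer /mk; symmetry; apply/idP; rewrite ltnS.
    case: (leqP N k) => Hk; first by rewrite leq_max HN.
    rewrite leq_max; apply/orP; right.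
    exact: (@leq_bigmax _ (fun j : 'I_N => x j) (Ordinal Hk)).
- pose P g (p : (nat -> nat) * nat) := D p.1 /\ g = mk p.1 p.2.
  pose pk g := epsilon (inhabits ((fun _ : nat => 0), 0)) (P g).
  have pkP : forall g, B g -> P g (pk g).
    move=> g [a [c [Da E]]]; apply: epsilon_spec; by exists (a, c).
  exists (fun g => io (pk g).1 (pk g).2); split.
  + by move=> g Bg; case: (pkP g Bg) => Dg _; apply: ioA.
  + move=> g h Bg Bh E; case: (pkP g Bg) => Dg Eg; case: (pkP h Bh) => Dh Eh.
    have [e1 e2] := ioI _ _ _ _ Dg Dh E.
    by rewrite Eg Eh e1 e2.
Qed.

From Stdlib Require Import ClassicalDescription.

Definition inhn : inhabited nat := inhabits 0.

Fixpoint ext (mv : seq nat -> nat) (s : seq nat) (i : nat) : seq nat :=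
  if i is i'.+1 then rcons (ext mv s i') (mv (ext mv s i')) else s.

Lemma size_ext mv s i : size (ext mv s i) = size s + i.
Proof. by elim: i => [|i IH] /=; rewrite ?addn0 // size_rcons IH addnS. Qed.

Lemma nth_ext mv s i j k : i <= j -> k < size (ext mv s i) ->
  nth 0 (ext mv s j) k = nth 0 (ext mv s i) k.
Proof.
elim: j => [|j IH]; first by rewrite leqn0 => /eqP ->.
rewrite leq_eqVlt => /orP[/eqP -> //|]; rewrite ltnS => hij hk /=.
rewrite nth_rcons size_ext.
have -> : k < size s + j by apply: (leq_trans hk); rewrite size_ext leq_add2l.
exact: IH.
Qed.

Lemma nth_ext2 mv s i j k : k < size (ext mv s i) -> k < size (ext mv s j) ->
  nth 0 (ext mv s j) k = nth 0 (ext mv s i) k.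
Proof.
move=> hi hj; case: (leqP i j) => h; first exact: nth_ext.
by rewrite (nth_ext (ltnW h) hj).
Qed.

Definition play mv s k := nth 0 (ext mv s k.+1) k.

Lemma mk_play mv s i : mkseq (play mv s) (size s + i) = ext mv s i.
Proof.
apply: (@eq_from_nth _ 0); first by rewrite size_mkseq size_ext.
move=> k; rewrite size_mkseq => hk; rewrite nth_mkseq // /play.
apply: nth_ext2; rewrite size_ext //.
exact: leq_addl.
Qed.

Lemma ans_play sg mv s i :
  answer sg (play mv s) (size s + i) = sg (rcons (ext mv s i) (mv (ext mv s i))).
Proof. by rewrite /answer -addnS mk_play. Qed.

Lemma play0 mv k : play mv [::] k = mv (ext mv [::] k).
Proof. by rewrite /play /= nth_rcons size_ext add0n ltnn eqxx. Qed.

Section Part2.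
Variable sg : strategyII.

Definition forced (s : seq nat) := forall n, sg (rcons s n) = true.
Definition cmove (s : seq nat) := epsilon inhn (fun n => sg (rcons s n) = false).

Lemma cmoveP s : ~ forced s -> sg (rcons s (cmove s)) = false.
Proof.
move=> nf; apply: (epsilon_spec inhn (fun n => sg (rcons s n) = false)); apply: NNPP => h; apply: nf => n.
by case E: (sg (rcons s n)) => //; case: h; exists n.
Qed.

Lemma min_ex (P : nat -> Prop) : (exists i, P i) -> exists i, P i /\ forall j, j < i -> ~ P j.
Proof.
case=> i; elim: i {-2}i (leqnn i) => [|m IH] i hi Pi.
  exists i; split=> // j; move: hi; rewrite leqn0 => /eqP ->; by [].
case: (classic (exists j, j < i /\ P j)) => [[j [hj Pj]]|h].
  by apply: (IH j) => //; rewrite -ltnS (leq_trans hj).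
by exists i; split=> // j hj Pj; apply: h; exists j.
Qed.

Definition Rprop s i := forced (ext cmove s i) /\ forall j, j < i -> ~ forced (ext cmove s j).
Definition Rp s := epsilon inhn (Rprop s).

Lemma RpP B s : winningII B sg -> Rprop s (Rp s).
Proof.
move=> win; apply: epsilon_spec; apply: min_ex; apply: NNPP => h.
have [hinf _] := win (play cmove s).
have [k hk ak] := hinf (size s).
rewrite -(subnKC hk) ans_play cmoveP in ak => // f; apply: h; by exists (k - size s).
Qed.

Inductive cons (g : nat -> nat) : seq nat -> Prop :=
| cons0 : cons g [::]
| consF s n : cons g s -> forced s -> n < g (size s) -> cons g (rcons s n)
| consN s : cons g s -> ~ forced s -> cons g (rcons s (cmove s)).

Lemma cons_bound g (F : seq nat -> nat) j :
  exists b, forall s, cons g s -> size s = j -> F s <= b.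
Proof.
elim: j F => [|j IH] F.
  by exists (F [::]) => s _ /size0nil ->.
pose F' s := maxn (\max_(n < g (size s)) F (rcons s (nat_of_ord n))) (F (rcons s (cmove s))).
have [b Hb] := IH F'; exists b => s' Hc.
case: Hc => [|s n Hs Hf Hn|s Hs Hf]; rewrite ?size_rcons //.
- case=> hs; apply: leq_trans (Hb s Hs hs); rewrite /F'.
  apply: leq_trans (leq_maxl _ _).
  exact: (@leq_bigmax _ (fun n : 'I_(g (size s)) => F (rcons s (nat_of_ord n))) (Ordinal Hn)).
- case=> hs; apply: leq_trans (Hb s Hs hs); rewrite /F'; exact: leq_maxr.
Qed.

Definition Hb (g : nat -> nat) (j : nat) : nat :=
  epsilon inhn (fun b => forall s, cons g s -> size s = j -> g (size s + Rp s) <= b).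

Lemma HbP g j s : cons g s -> size s = j -> g (size s + Rp s) <= Hb g j.
Proof.
apply: (epsilon_spec inhn (fun b => forall s, cons g s -> size s = j -> g (size s + Rp s) <= b)).
exact: cons_bound.
Qed.

Definition mvx (x : nat -> nat) (s : seq nat) : nat :=
  if excluded_middle_informative (forced s) then \max_(t < (size s).+1) x t else cmove s.

Lemma dom_part (B : funfam) : winningII B sg ->
  forall x, exists2 g, B g & forall j, x j <= Hb g j.
Proof.
move=> win x.
pose y := play (mvx x) [::].
pose P k := ext (mvx x) [::] k.
have szP : forall k, size (P k) = k by move=> k; rewrite size_ext.
have [_ [g Bg hg]] := win y.
have ansP : forall k, sg (rcons (P k) (mvx x (P k))) = (mvx x (P k) < g k).
  by move=> k; have := ans_play sg (mvx x) [::] k; rewrite /= add0n => <-; rewrite hg /y play0.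
exists g => // j.
have consP : forall k, cons g (P k).
  elim=> [|k IH]; first exact: cons0.
  rewrite /P /=; rewrite -/(P k).
  case: (classic (forced (P k))) => hf.
    apply: consF => //; rewrite szP -ansP; exact: hf.
  have -> : mvx x (P k) = cmove (P k).
    by rewrite /mvx; case: (excluded_middle_informative _).
  exact: consN.
pose s := P j.
have [hfor hnf] := RpP s win.
have ext_eq : forall i, i <= Rp s -> P (j + i) = ext cmove s i.
  elim=> [|i IH] hi; first by rewrite addn0.
  rewrite addnS /P /= -/(P (j + i)) IH ?(ltnW hi) //.
  have nf := hnf i hi.
  by rewrite /mvx; case: (excluded_middle_informative _).
have Pp := ext_eq _ (leqnn _).
have fp : forced (P (j + Rp s)) by rewrite Pp.
have := ansP (j + Rp s).
rewrite /mvx; destruct (excluded_middle_informative (forced (P (j + Rp s)))) as [hF|nf]; last by case: nf.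
move=> eq; have lt : \max_(t < (size (P (j + Rp s))).+1) x t < g (j + Rp s) by rewrite -eq; exact: fp.
have hb := HbP (consP j) (szP j); rewrite szP in hb.
apply: leq_trans (ltnW (leq_trans lt hb)).
rewrite szP.
exact: (@leq_bigmax _ (fun t : 'I_(j + Rp s).+1 => x t) (Ordinal (leq_addr (Rp s) j : j < (j + Rp s).+1))).
Qed.

End Part2.

Lemma part2 (B : funfam) : II_has_winning B -> exists2 A : funfam, dominating A & card_le A B.
Proof.
move=> [sg win].
pose A : funfam := fun h => exists2 g, B g & h = Hb sg g.
exists A.
- move=> x; have [g Bg hx] := dom_part win x.
  exists (Hb sg g); first by exists g.
  by exists 0 => n _; exact: hx.
- pose pk h := epsilon inhf (fun g => B g /\ h = Hb sg g).
  have pkP : forall h, A h -> B (pk h) /\ h = Hb sg (pk h).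
    move=> h [g Bg E]; apply: (epsilon_spec inhf (fun g => B g /\ h = Hb sg g)); by exists g.
  exists pk; split.
  + by move=> h Ah; case: (pkP h Ah).
  + move=> h1 h2 A1 A2 E; case: (pkP h1 A1) => _ e1; case: (pkP h2 A2) => _ e2.
    by rewrite e1 e2 E.
Qed.

Theorem mainTheorem2 :
  (forall A : funfam, dominating A ->
     exists2 B : funfam, II_has_winning B & card_le B A) /\
  (forall B : funfam, II_has_winning B ->
     exists2 A : funfam, dominating A & card_le A B).
Proof. split; [exact: part1 | exact: part2]. Qed.
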